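(* Let $a\in\mathrm{Im}(\mathbb{H})$ and $b\in\mathbb{H}$ have norm one. Then the three algebras $\mathbb{H}\times\mathbb{H}_{(T_{a,\bar a}\circ\sigma_{\mathbb{H}},\,I_{\mathbb{H}})}$, $\mathbb{H}\times\mathbb{H}_{(I_{\mathbb{H}},\,-T_{b,b}\circ\sigma_{\mathbb{H}})}$ and ${}^*\mathbb{O}(i,1)$ are mutually isomorphic.
   Context: For $a,b\in\mathbb{H}$, $T_{a,b}(x)=axb$; $\sigma_{\mathbb{H}}(x)=\bar x$; $I_{\mathbb{H}}$ is the identity. $\mathbb{O}=\mathbb{H}\times\mathbb{H}$ with Cayley–Dickson product $(x,y)\bullet(u,v)=(xu-\bar v y,\ y\bar u+vx)$, conjugation $\overline{(x,y)}=(\bar x,-y)$, and $i=(i,0)$. For linear maps $f,g$ of $\mathbb{H}$, $\mathbb{H}\times\mathbb{H}_{(f,g)}$ is $\mathbb{H}\times\mathbb{H}$ with product $(x,y)\odot(u,v)=(f(x),g(y))\bullet(u,v)$. ${}^*\mathbb{O}(i,1)$ is $\mathbb{O}$ with product $x\odot y=(\bar x i)y$. *)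

(* Defs.v *)
From mathcomp Require Import all_boot all_order all_algebra.
From mathcomp Require Import reals.
Set Implicit Arguments. Unset Strict Implicit. Unset Printing Implicit Defensive.
Import Order.TTheory GRing.Theory Num.Theory.
Local Open Scope ring_scope.

Section Quat.
Variable R : realType.

Record quat := Quat { q0 : R; q1 : R; q2 : R; q3 : R }.

Definition qadd (x y : quat) : quat :=
  Quat (q0 x + q0 y) (q1 x + q1 y) (q2 x + q2 y) (q3 x + q3 y).
Definition qopp (x : quat) : quat := Quat (- q0 x) (- q1 x) (- q2 x) (- q3 x).
Definition qscale (c : R) (x : quat) : quat :=
  Quat (c * q0 x) (c * q1 x) (c * q2 x) (c * q3 x).
(* Hamilton product: i^2 = j^2 = k^2 = ijk = -1. *)
Definition qmul (x y : quat) : quat :=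
  Quat (q0 x * q0 y - q1 x * q1 y - q2 x * q2 y - q3 x * q3 y)
       (q0 x * q1 y + q1 x * q0 y + q2 x * q3 y - q3 x * q2 y)
       (q0 x * q2 y - q1 x * q3 y + q2 x * q0 y + q3 x * q1 y)
       (q0 x * q3 y + q1 x * q2 y - q2 x * q1 y + q3 x * q0 y).
Definition qconj (x : quat) : quat := Quat (q0 x) (- q1 x) (- q2 x) (- q3 x).
Definition qzero : quat := Quat 0 0 0 0.
Definition qi : quat := Quat 0 1 0 0.
Definition qnorm2 (x : quat) : R := q0 x ^+ 2 + q1 x ^+ 2 + q2 x ^+ 2 + q3 x ^+ 2.
Definition qIm (x : quat) : Prop := q0 x = 0.

Definition Tq (a b : quat) (x : quat) : quat := qmul (qmul a x) b.

Definition oct := (quat * quat)%type.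
Definition oadd (x y : oct) : oct := (qadd x.1 y.1, qadd x.2 y.2).
Definition oscale (c : R) (x : oct) : oct := (qscale c x.1, qscale c x.2).
(* Cayley-Dickson product (x,y).(u,v) = (xu - conj(v) y, y conj(u) + v x) *)
Definition omul (x y : oct) : oct :=
  (qadd (qmul x.1 y.1) (qopp (qmul (qconj y.2) x.2)),
   qadd (qmul x.2 (qconj y.1)) (qmul y.2 x.1)).
Definition oconj (x : oct) : oct := (qconj x.1, qopp x.2).
Definition oi : oct := (qi, qzero).

(* H x H_(f,g): (x,y) (.) (u,v) = (f x, g y) . (u,v) *)
Definition HHprod (f g : quat -> quat) (x y : oct) : oct :=
  omul (f x.1, g x.2) y.
(* *O(i,1): x (.) y = (conj(x) i) y *)
Definition starO_i1 (x y : oct) : oct := omul (omul (oconj x) oi) y.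

Definition algA (a : quat) : oct -> oct -> oct :=
  HHprod (fun x => Tq a (qconj a) (qconj x)) id.
Definition algB (b : quat) : oct -> oct -> oct :=
  HHprod id (fun y => qopp (Tq b b (qconj y))).

Definition alg_iso (m1 m2 : oct -> oct -> oct) (phi : oct -> oct) : Prop :=
  bijective phi /\
  (forall x y, phi (oadd x y) = oadd (phi x) (phi y)) /\
  (forall (c : R) x, phi (oscale c x) = oscale c (phi x)) /\
  (forall x y, phi (m1 x y) = m2 (phi x) (phi y)).

Definition alg_isomorphic (m1 m2 : oct -> oct -> oct) : Prop :=
  exists phi, alg_iso m1 m2 phi.

End Quat.

(* Main.v *)
Require Import Defs.
From mathcomp Require Import all_boot all_order all_algebra.
From mathcomp Require Import reals.
From mathcomp Require Import ring lra.
Set Implicit Arguments. Unset Strict Implicit. Unset Printing Implicit Defensive.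
Import Order.TTheory GRing.Theory Num.Theory.
Local Open Scope ring_scope.

Notation "x ** y" := (qmul x y) (at level 40, left associativity).
Definition qone (R : realType) : quat R := Quat 1 0 0 0.
Definition phi3 (R : realType) (p : oct R) : oct R := (p.1 ** qi R, p.2).
Definition phi3i (R : realType) (p : oct R) : oct R := (qopp (p.1 ** qi R), p.2).
Definition psi (R : realType) (p : oct R) : oct R :=
  (Quat (q0 p.1) (q0 p.2) (q2 p.1) (- q2 p.2),
   Quat (q1 p.1) (- q1 p.2) (- q3 p.1) (- q3 p.2)).
Definition phi1 (R : realType) (b : quat R) (p : oct R) : oct R := (p.1, qconj b ** p.2).
Definition phi1i (R : realType) (b : quat R) (p : oct R) : oct R := (p.1, b ** p.2).
Definition rho (R : realType) (q : quat R) (c : R) (p : oct R) : oct R :=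
  ((q ** p.1) ** qscale c (qconj q), (q ** p.2) ** qscale c (qconj q)).
Definition rhoi (R : realType) (q : quat R) (c : R) (p : oct R) : oct R :=
  ((qscale c (qconj q) ** p.1) ** q, (qscale c (qconj q) ** p.2) ** q).

Lemma QuatP (R : realType) (a b c d e f g h : R) :
  a = e -> b = f -> c = g -> d = h -> Quat a b c d = Quat e f g h.
Proof. by move=> -> -> -> ->. Qed.

Lemma oct_ext (R : realType) (x y : oct R) : x.1 = y.1 -> x.2 = y.2 -> x = y.
Proof. by case: x; case: y => /= ? ? ? ? -> ->. Qed.

Ltac qdest := repeat match goal with x : quat _ |- _ =>
   let a := fresh "a" in let b := fresh "b" in
   let c := fresh "c" in let d := fresh "d" in destruct x as [a b c d] end.
Ltac qcbv := cbv [phi3 phi3i psi phi1 phi1i rho rhoi algA algB HHprod starO_i1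
  omul oconj oi oadd oscale Tq qnorm2
  qmul qadd qopp qconj qscale qi qzero qone q0 q1 q2 q3 fst snd].
Ltac qring := qdest; qcbv; apply: QuatP; ring.
Ltac oring := qdest; qcbv; congr (_, _); apply: QuatP; ring.

Lemma iso_comp (R : realType) (m1 m2 m3 : oct R -> oct R -> oct R) f g :
  alg_iso m1 m2 f -> alg_iso m2 m3 g -> alg_iso m1 m3 (g \o f).
Proof.
move=> [bf [af [sf mf]]] [bg [ag [sg mg]]]; split; last split; last split.
- exact: bij_comp.
- by move=> x y /=; rewrite af ag.
- by move=> c x /=; rewrite sf sg.
- by move=> x y /=; rewrite mf mg.
Qed.

Lemma iso_sym (R : realType) (m1 m2 : oct R -> oct R -> oct R) :
  alg_isomorphic m1 m2 -> alg_isomorphic m2 m1.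
Proof.
move=> [f [[g fK gK] [af [sf mf]]]]; exists g; split; last split; last split.
- by exists f.
- by move=> x y; apply: (can_inj fK); rewrite af !gK.
- by move=> c x; apply: (can_inj fK); rewrite sf !gK.
- by move=> x y; apply: (can_inj fK); rewrite mf !gK.
Qed.

Lemma iso_trans (R : realType) (m1 m2 m3 : oct R -> oct R -> oct R) :
  alg_isomorphic m1 m2 -> alg_isomorphic m2 m3 -> alg_isomorphic m1 m3.
Proof. move=> [f hf] [g hg]; exists (g \o f); exact: iso_comp hf hg. Qed.

Lemma phi3_iso (R : realType) : alg_iso (algA (qi R)) (@starO_i1 R) (@phi3 R).
Proof.
split; last split; last split.
- by exists (@phi3i R) => -[x y]; oring.
- by move=> [x y] [u v]; oring.
- by move=> c [x y]; oring.
- by move=> [x y] [u v]; oring.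
Qed.

Lemma psi_iso (R : realType) : alg_iso (algB (qone R)) (algA (qi R)) (@psi R).
Proof.
split; last split; last split.
- by exists (@psi R) => -[x y]; oring.
- by move=> [x y] [u v]; oring.
- by move=> c [x y]; oring.
- by move=> [x y] [u v]; oring.
Qed.

Lemma qscale1 (R : realType) (x : quat R) : qscale 1 x = x.
Proof. qring. Qed.

Lemma phi1_aux1 (R : realType) (b y : quat R) :
  b ** (qconj b ** y) = qscale (qnorm2 b) y.
Proof. qring. Qed.
Lemma phi1_aux2 (R : realType) (b y : quat R) :
  qconj b ** (b ** y) = qscale (qnorm2 b) y.
Proof. qring. Qed.
Lemma phi1_aux3 (R : realType) (b x y u v : quat R) :
  qconj b ** qadd (qopp ((b ** qconj y) ** b) ** qconj u) (v ** x) =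
  qadd (qscale (qnorm2 b) (qopp ((qone R ** qconj (qconj b ** y)) ** qone R) ** qconj u))
       ((qconj b ** v) ** x).
Proof. qring. Qed.

Lemma phi1_iso (R : realType) (b : quat R) : qnorm2 b = 1 ->
  alg_iso (algB b) (algB (qone R)) (phi1 b).
Proof.
move=> hb; split; last split; last split.
- exists (phi1i b) => -[x y]; apply: oct_ext => //=.
  + by rewrite /phi1 /phi1i /= ?phi1_aux1 ?phi1_aux2 hb qscale1.
  + by rewrite /phi1 /phi1i /= ?phi1_aux1 ?phi1_aux2 hb qscale1.
- by move=> [x y] [u v]; oring.
- by move=> c [x y]; oring.
- move=> [x y] [u v]; apply: oct_ext.
  + qcbv; apply: QuatP; ring.
  + rewrite /phi1 /algB /HHprod /omul /Tq /=.
    by rewrite phi1_aux3 hb qscale1.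
Qed.

Lemma rhoK1 (R : realType) (q z : quat R) (c : R) :
  qconj ((q ** z) ** qscale c (qconj q)) = (q ** qconj z) ** qscale c (qconj q).
Proof. qring. Qed.

Lemma rhoK2aux (R : realType) (q z w : quat R) (c : R) :
  ((q ** z) ** qscale c (qconj q)) ** ((q ** w) ** qscale c (qconj q)) =
  qscale (c * qnorm2 q) ((q ** (z ** w)) ** qscale c (qconj q)).
Proof. qring. Qed.

Lemma rhoK2 (R : realType) (q z w : quat R) (c : R) : c * qnorm2 q = 1 ->
  ((q ** z) ** qscale c (qconj q)) ** ((q ** w) ** qscale c (qconj q)) =
  (q ** (z ** w)) ** qscale c (qconj q).
Proof. by move=> h; rewrite rhoK2aux h qscale1. Qed.

Lemma rhoK3a (R : realType) (q z : quat R) (c : R) :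
  (qi R ** ((q ** z) ** qscale c (qconj q))) ** qconj (qi R) =
  ((qi R ** q) ** z) ** qscale c (qconj (qi R ** q)).
Proof. qring. Qed.

Lemma rhoK3b (R : realType) (q a z : quat R) (c : R) :
  ((q ** a) ** z) ** qscale c (qconj (q ** a)) =
  (q ** ((a ** z) ** qconj a)) ** qscale c (qconj q).
Proof. qring. Qed.

Lemma rhoK3 (R : realType) (q a z : quat R) (c : R) : q ** a = qi R ** q ->
  (qi R ** ((q ** z) ** qscale c (qconj q))) ** qconj (qi R) =
  (q ** ((a ** z) ** qconj a)) ** qscale c (qconj q).
Proof. by move=> h; rewrite rhoK3a -h rhoK3b. Qed.

Lemma qmulDl (R : realType) (x y z : quat R) : qadd x y ** z = qadd (x ** z) (y ** z).
Proof. qring. Qed.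
Lemma qmulDr (R : realType) (x y z : quat R) : z ** qadd x y = qadd (z ** x) (z ** y).
Proof. qring. Qed.
Lemma qmulNl (R : realType) (x y : quat R) : qopp x ** y = qopp (x ** y).
Proof. qring. Qed.
Lemma qmulNr (R : realType) (x y : quat R) : x ** qopp y = qopp (x ** y).
Proof. qring. Qed.

Lemma rhoC1 (R : realType) (q x : quat R) (c : R) :
  (qscale c (qconj q) ** ((q ** x) ** qscale c (qconj q))) ** q =
  qscale (c * qnorm2 q) (qscale (c * qnorm2 q) x).
Proof. qring. Qed.
Lemma rhoC2 (R : realType) (q x : quat R) (c : R) :
  (q ** ((qscale c (qconj q) ** x) ** q)) ** qscale c (qconj q) =
  qscale (c * qnorm2 q) (qscale (c * qnorm2 q) x).
Proof. qring. Qed.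

Lemma rho_iso (R : realType) (a q : quat R) (c : R) :
  q ** a = qi R ** q -> c * qnorm2 q = 1 ->
  alg_iso (algA a) (algA (qi R)) (rho q c).
Proof.
move=> hq hc; split; last split; last split.
- exists (rhoi q c) => -[x y]; rewrite /rho /rhoi /=.
  + by rewrite !rhoC1 hc !qscale1.
  + by rewrite !rhoC2 hc !qscale1.
- by move=> [x y] [u v]; oring.
- by move=> k [x y]; oring.
- move=> [x y] [u v]; rewrite /rho /algA /HHprod /omul /Tq /=.
  rewrite !rhoK1 !(rhoK3 _ _ hq) !(rhoK2 _ _ hc).
  by rewrite !qmulDr !qmulDl !qmulNr !qmulNl.
Qed.

Lemma qscale0_add (R : realType) (x y : quat R) : qadd x (qscale 0 y) = x.
Proof. qring. Qed.

Lemma exists_q (R : realType) (a : quat R) : q0 a = 0 -> qnorm2 a = 1 ->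
  exists q c, q ** a = qi R ** q /\ c * qnorm2 q = 1.
Proof.
case: a => a0 a1 a2 a3 /= -> hn.
have h2 : 0 <= a2 ^+ 2 := sqr_ge0 a2.
have h3 : 0 <= a3 ^+ 2 := sqr_ge0 a3.
case: (a1 =P -1) => [ea1|na1].
- have hs : a2 ^+ 2 + a3 ^+ 2 = 0.
    move: hn; rewrite /qnorm2 /= ea1 => hn; lra.
  move/eqP: hs; rewrite paddr_eq0 // !sqrf_eq0 => /andP[/eqP e2 /eqP e3].
  exists (Quat 0 0 1 0), 1; rewrite ea1 e2 e3; split.
  + by qcbv; apply: QuatP; ring.
  + by rewrite /qnorm2 /=; ring.
- set q := Quat (1 + a1) 0 a3 (- a2).
  have hpos : 0 < (1 + a1) ^+ 2.
    rewrite lt_def sqr_ge0 andbT sqrf_eq0; apply/eqP => h; apply: na1; lra.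
  have hq : 0 < qnorm2 q.
    rewrite /qnorm2 /= sqrrN; have := sqr_ge0 (0 : R); lra.
  exists q, (qnorm2 q)^-1; split; last by rewrite mulVf // gt_eqF.
  have E : q ** Quat 0 a1 a2 a3 =
      qadd (qi R ** q) (qscale (qnorm2 (Quat 0 a1 a2 a3) - 1) (qi R)).
    by rewrite /q; qcbv; apply: QuatP; ring.
  by rewrite E /qnorm2 /=; rewrite /qnorm2 /= in hn; rewrite hn subrr qscale0_add.
Qed.

Theorem corollary5 (R : realType) (a b : quat R) :
  qIm a -> qnorm2 a = 1 -> qnorm2 b = 1 ->
  alg_isomorphic (algA a) (algB b) /\
  alg_isomorphic (algB b) (@starO_i1 R) /\
  alg_isomorphic (algA a) (@starO_i1 R).
Proof.
move=> ha hna hnb.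
have isoB : alg_isomorphic (algB b) (@starO_i1 R).
  exists ((@phi3 R) \o ((@psi R) \o phi1 b)).
  apply: iso_comp; last exact: phi3_iso.
  apply: iso_comp; last exact: psi_iso.
  exact: phi1_iso.
have isoA : alg_isomorphic (algA a) (@starO_i1 R).
  have [q [c [hq hc]]] := exists_q ha hna.
  exists ((@phi3 R) \o rho q c).
  apply: iso_comp; last exact: phi3_iso.
  exact: rho_iso.
split; last by split.
exact: iso_trans isoA (iso_sym isoB).
Qed.
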